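(* Let $G$ be a bipartite graph without isolated vertices such that $\mathrm{Ind}(G)$ is pure. Then some pure order of $G$ has a cross if and only if every pure order of $G$ has a cross.
   Context: $\mathrm{Ind}(G)$ is the complex of independent sets of $G$. For a bipartite graph $G$ without isolated vertices with $\mathrm{Ind}(G)$ pure, a pure order of $G$ is a partition of the vertex set into independent sets $\{x_1,\ldots,x_n\}$ and $\{y_1,\ldots,y_n\}$ such that (1) $x_iy_i$ is an edge for all $1\le i\le n$, and (2) whenever $x_iy_j$ and $x_jy_k$ are edges with $i,j,k$ distinct, $x_iy_k$ is an edge. (Such orders exist exactly when $\mathrm{Ind}(G)$ is pure, by a theorem of Villarreal.) A pure order has a cross if there are $i\ne j$ with both $x_iy_j$ and $x_jy_i$ edges of $G$; otherwise it is cross-free. *)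

(* Defs.v *)
(* A simple graph is a symmetric irreflexive relation e on a finType T. *)
From mathcomp Require Import all_boot.
Set Implicit Arguments. Unset Strict Implicit. Unset Printing Implicit Defensive.

Section Graph.
Variables (T : finType) (e : rel T).

Definition independent (A : {set T}) : bool :=
  [forall u in A, forall v in A, ~~ e u v].

(* A is a maximal independent set (facet of Ind(G)). *)
Definition maximal_independent (A : {set T}) : bool :=
  independent A && [forall B : {set T}, (A \proper B) ==> ~~ independent B].

Definition Ind_pure : Prop :=
  forall A B : {set T}, maximal_independent A -> maximal_independent B -> #|A| = #|B|.

Definition bipartite : Prop :=
  exists A : {set T}, independent A /\ independent (~: A).

Definition no_isolated_vertices : Prop := forall v : T, exists u : T, e v u.

Definition pure_order (n : nat) (x y : 'I_n -> T) : Prop :=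
  [/\ injective x, injective y,
      (forall i j, x i != y j),
      (forall v, (exists i, v = x i) \/ (exists i, v = y i)) &
      independent [set x i | i in 'I_n] ] /\
  [/\ independent [set y i | i in 'I_n],
      (forall i, e (x i) (y i)) &
      (forall i j k, i != j -> j != k -> i != k ->
         e (x i) (y j) -> e (x j) (y k) -> e (x i) (y k))].

Definition has_cross (n : nat) (x y : 'I_n -> T) : Prop :=
  exists i j : 'I_n, i != j /\ e (x i) (y j) /\ e (x j) (y i).

End Graph.

(* Main.v *)
Require Import Defs.
From mathcomp Require Import all_boot.
From Stdlib Require Import Classical.
Set Implicit Arguments. Unset Strict Implicit. Unset Printing Implicit Defensive.


Definition Nb (T : finType) (r : rel T) (S : {set T}) : {set T} :=
  [set v | [exists u in S, r u v]].

Lemma NbP (T : finType) (r : rel T) (S : {set T}) v :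
  reflect (exists2 u, u \in S & r u v) (v \in Nb r S).
Proof.
rewrite inE; apply: (iffP existsP) => [[u /andP[hu huv]]|[u hu huv]].
  by exists u.
by exists u; rewrite hu.
Qed.

Lemma NbU (T : finType) (r : rel T) (A B : {set T}) : Nb r (A :|: B) = Nb r A :|: Nb r B.
Proof.
apply/setP=> v; rewrite in_setU; apply/NbP/orP => [[u]|].
  by rewrite inE => /orP[hu|hu] huv; [left|right]; apply/NbP; exists u.
by case=> /NbP[u hu huv]; exists u => //; rewrite inE hu ?orbT.
Qed.

Lemma hall (T : finType) (n : nat) : forall (r : rel T) (X : {set T}), #|X| <= n ->
  (forall S : {set T}, S \subset X -> #|S| <= #|Nb r S|) ->
  exists f : T -> T, {in X &, injective f} /\ {in X, forall x, r x (f x)}.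
Proof.
elim: n => [|n IH] r X hX hH.
  move: hX; rewrite leqn0 => /eqP/cards0_eq ->.
  by exists id; split => x; rewrite inE.
have [->|/set0Pn[x0 hx0]] := eqVneq X set0.
  by exists id; split => x; rewrite inE.
case: (boolP [exists S : {set T}, [&& S \proper X, S != set0 & #|Nb r S| <= #|S|]]).
- case/existsP => S /and3P[pSX nS0 tS].
  have sSX := proper_sub pSX.
  have hS : #|Nb r S| = #|S| by apply/eqP; rewrite eqn_leq tS hH.
  have [f1 [inj1 r1]] : exists f : T -> T, {in S &, injective f} /\ {in S, forall x, r x (f x)}.
    apply: IH; first by rewrite -ltnS; apply: leq_trans (proper_card pSX) hX.
    by move=> S' sS'; apply: hH; apply: subset_trans sS' sSX.
  pose r2 := [rel u v | r u v && (v \notin Nb r S)].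
  have [f2 [inj2 r2f]] : exists f : T -> T, {in X :\: S &, injective f} /\ {in X :\: S, forall x, r2 x (f x)}.
    apply: (IH r2 (X :\: S)).
      rewrite (cardsDS sSX); move: nS0; rewrite -card_gt0 => h0.
      by rewrite leq_subLR; apply: leq_trans hX _; rewrite -add1n leq_add2r.
    move=> S' sS'.
    have E : Nb r2 S' = Nb r S' :\: Nb r S.
      apply/setP => v; rewrite in_setD; apply/NbP/andP => [[u hu /andP[huv hv]]|[hv /NbP[u hu huv]]].
        by split => //; apply/NbP; exists u.
      by exists u => //=; rewrite huv hv.
    have dSS : S :&: S' = set0.
      apply/setP => v; rewrite !inE; apply/negP => /andP[h1 h2].
      by move/subsetP: sS' => /(_ v h2); rewrite inE h1.
    have h1 : #|S :|: S'| <= #|Nb r (S :|: S')|.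
      by apply: hH; rewrite subUset sSX (subset_trans sS') // subsetDl.
    rewrite cardsU dSS cards0 subn0 NbU -(cardsID (Nb r S) (Nb r S :|: Nb r S')) setUK setDUl setDv set0U hS in h1.
    by rewrite E; rewrite leq_add2l in h1.
  exists (fun x => if x \in S then f1 x else f2 x); split.
    move=> u v hu hv /=.
    case: (boolP (u \in S)) => huS; case: (boolP (v \in S)) => hvS.
    - exact: inj1.
    - move=> h; have : f1 u \in Nb r S by apply/NbP; exists u => //; exact: r1.
      have hv' : v \in X :\: S by rewrite inE hvS hv.
      by move: (r2f v hv') => /andP[_]; rewrite -h => /negP.
    - move=> h; have : f1 v \in Nb r S by apply/NbP; exists v => //; exact: r1.
      have hu' : u \in X :\: S by rewrite inE huS hu.
      by move: (r2f u hu') => /andP[_]; rewrite h => /negP.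
    - by apply: inj2; rewrite inE ?huS ?hvS.
  move=> u hu /=; case: ifP => huS; first exact: r1.
  have hu' : u \in X :\: S by rewrite inE huS hu.
  by case/andP: (r2f u hu').
- rewrite negb_exists => /forallP hnt.
  have [y0 hy0] : exists y0, r x0 y0.
    have := hH [set x0]; rewrite sub1set hx0 cards1 card_gt0 => /(_ isT) /set0Pn[y0 /NbP[u]].
    by rewrite inE => /eqP ->; exists y0.
  pose r' := [rel u v | r u v && (v != y0)].
  have [f' [inj' rf']] : exists f : T -> T, {in X :\ x0 &, injective f} /\ {in X :\ x0, forall x, r' x (f x)}.
    apply: (IH r' (X :\ x0)).
      by move: hX; rewrite (cardsD1 x0 X) hx0 add1n ltnS.
    move=> S sS.
    have [->|nS0] := eqVneq S set0; first by rewrite cards0.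
    have pSX : S \proper X := sub_proper_trans sS (properD1 hx0).
    have := hnt S; rewrite pSX nS0 /= -ltnNge => lt.
    have sub : Nb r S :\ y0 \subset Nb r' S.
      apply/subsetP => v; rewrite in_setD1 => /andP[hv /NbP[u hu huv]].
      by apply/NbP; exists u => //=; rewrite huv hv.
    apply: leq_trans (subset_leq_card sub).
    move: lt; rewrite (cardsD1 y0 (Nb r S)).
    by case: (y0 \in Nb r S); rewrite ?add1n ?add0n ?ltnS // => /ltnW.
  exists (fun x => if x == x0 then y0 else f' x); split.
    move=> u v hu hv /=.
    case: (eqVneq u x0) => hux; case: (eqVneq v x0) => hvx.
    - by rewrite hux hvx.
    - have hv' : v \in X :\ x0 by rewrite in_setD1 hvx hv.
      by move: (rf' v hv') => /andP[_] /[swap] ->; rewrite eqxx.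
    - have hu' : u \in X :\ x0 by rewrite in_setD1 hux hu.
      by move: (rf' u hu') => /andP[_] /[swap] ->; rewrite eqxx.
    - by apply: inj'; rewrite in_setD1 ?hux ?hvx.
  move=> u hu /=; case: (eqVneq u x0) => [->//|hux].
  have hu' : u \in X :\ x0 by rewrite in_setD1 hux hu.
  by case/andP: (rf' u hu').
Qed.

Lemma indP (T : finType) (e : rel T) (A : {set T}) :
  reflect (forall u v, u \in A -> v \in A -> ~~ e u v) (independent e A).
Proof.
apply: (iffP forall_inP) => [h u v hu hv|h u hu].
  by move: (h u hu) => /forall_inP; apply.
by apply/forall_inP => v hv; apply: h.
Qed.

Lemma ind_sub (T : finType) (e : rel T) (A B : {set T}) :
  independent e B -> A \subset B -> independent e A.
Proof.
move=> /indP h /subsetP s; apply/indP => u v hu hv; exact: h (s u hu) (s v hv).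
Qed.

Lemma ind_extend (T : finType) (e : rel T) (S : {set T}) :
  independent e S -> exists M, maximal_independent e M /\ S \subset M.
Proof.
move=> hS.
have hP : independent e S && (S \subset S) by rewrite hS subxx.
case: (@arg_maxnP _ S (fun B : {set T} => independent e B && (S \subset B)) (fun B : {set T} => #|B|) hP) => M /andP[hM sM] hmax.
exists M; split => //; rewrite /maximal_independent hM /=.
apply/forallP => B; apply/implyP => pMB; apply/negP => hB.
have := hmax B; rewrite hB (subset_trans sM (proper_sub pMB)) => /(_ isT).
by move=> h; have := leq_trans (proper_card pMB) h; rewrite ltnn.
Qed.

Lemma max_crit (T : finType) (e : rel T) (M : {set T}) :
  independent e M -> (forall v, v \notin M -> exists2 u, u \in M & e u v) ->
  maximal_independent e M.
Proof.
move=> hM hc; rewrite /maximal_independent hM /=.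
apply/forallP => B; apply/implyP => /properP[sMB [v hvB hvM]].
have [u huM huv] := hc v hvM.
apply/negP => /indP hB.
by move: (hB u v (subsetP sMB u huM) hvB); rewrite huv.
Qed.

Lemma pair_cover (T : finType) (e : rel T) (hpure : Ind_pure e) n (x y : 'I_n -> T) :
  injective x -> (forall i j, x i != y j) ->
  (forall v, (exists i, v = x i) \/ (exists i, v = y i)) ->
  independent e [set x i | i in 'I_n] -> (forall i, e (x i) (y i)) ->
  forall M, maximal_independent e M -> forall k, (x k \in M) || (y k \in M).
Proof.
move=> ix xy cov indX exy M hM k.
set X := [set x i | i in 'I_n].
have mX : maximal_independent e X.
  apply: max_crit => // v hv.
  case: (cov v) => [[i hi]|[i ->]]; first by rewrite hi imset_f in hv.
  by exists (x i); [rewrite imset_f | exact: exy].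
have cX : #|X| = n by rewrite card_imset // card_ord.
have cM : #|M| = n by rewrite -cX; exact: hpure.
apply/negPn/negP; rewrite negb_or => /andP[hxk hyk].
have /indP iM := (andP hM).1.
pose I1 := [set i | x i \in M]; pose I2 := [set i | y i \in M].
have h1 : #|M :&: X| <= #|I1|.
  apply: leq_trans (leq_imset_card x I1).
  apply: subset_leq_card; apply/subsetP => v; rewrite inE => /andP[hv /imsetP[i _ hi]].
  by rewrite hi; apply: imset_f; rewrite inE -hi.
have h2 : #|M :\: X| <= #|I2|.
  apply: leq_trans (leq_imset_card y I2).
  apply/subset_leq_card/subsetP => v; rewrite inE => /andP[hvX hv].
  case: (cov v) => [[i hi]|[i hi]]; first by rewrite hi imset_f in hvX.
  by rewrite hi; apply: imset_f; rewrite inE -hi.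
have d : I1 :&: I2 = set0.
  apply/setP => i; rewrite !inE; apply/negP => /andP[a b].
  by move: (iM _ _ a b); rewrite exy.
have hU : #|I1 :|: I2| < n.
  rewrite -[n in _ < n](card_ord n) -cardsT; apply: proper_card; apply/properP; split; first exact: subsetT.
  by exists k; rewrite !inE // negb_or hxk hyk.
have h3 : n <= #|I1| + #|I2|.
  by rewrite -[X in X <= _]cM -(cardsID X M); exact: leq_add h1 h2.
by move: hU; rewrite cardsU d cards0 subn0 ltnNge h3.
Qed.

Lemma upset_max (T : finType) (e : rel T) (e_sym : symmetric e) n (x y : 'I_n -> T)
  (po : pure_order e x y) (P : pred 'I_n) :
  (forall k l, P k -> e (x k) (y l) -> P l) ->
  exists M, [/\ maximal_independent e M, (forall k, (x k \in M) = P k) &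
             (forall k, (y k \in M) = ~~ P k)].
Proof.
move=> hP.
case: po => [[ix iy xy cov indX] [indY exy tr]].
pose M := [set x k | k in P] :|: [set y k | k in [predC P]].
have memx k : (x k \in M) = P k.
  rewrite in_setU; apply/orP/idP => [[/imsetP[i hi h]|/imsetP[i _ h]]|hk].
  - by rewrite (ix _ _ h).
  - by move: (xy k i); rewrite h eqxx.
  by left; apply: imset_f.
have memy k : (y k \in M) = ~~ P k.
  rewrite in_setU; apply/orP/idP => [[/imsetP[i hi h]|/imsetP[i hi h]]|hk].
  - by move: (xy i k); rewrite h eqxx.
  - by rewrite (iy _ _ h); move: hi; rewrite inE.
  by right; apply: imset_f; rewrite inE.
have indM : independent e M.
  apply/indP => u v hu hv.
  have [[i ?]|[i ?]] := cov u; have [[j ?]|[j ?]] := cov v; subst u v.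
  - by move/indP: indX; apply; apply: imset_f.
  - rewrite memx in hu; rewrite memy in hv; apply/negP => h.
    by move: hv; rewrite (hP _ _ hu h).
  - rewrite memy in hu; rewrite memx in hv; apply/negP; rewrite e_sym => h.
    by move: hu; rewrite (hP _ _ hv h).
  - by move/indP: indY; apply; apply: imset_f.
exists M; split => //.
apply: max_crit => // v hv.
have [[i hi]|[i hi]] := cov v; subst v.
- exists (y i); last by rewrite e_sym.
  by rewrite memy; rewrite memx in hv.
- exists (x i) => //.
  by rewrite memx; rewrite memy negbK in hv.
Qed.

Lemma sep (T : finType) (e : rel T) (e_sym : symmetric e) n (x y : 'I_n -> T)
  (po : pure_order e x y) (nc : ~ has_cross e x y) (u v : T) :
  u != v -> exists M, maximal_independent e M /\ (u \in M) != (v \in M).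
Proof.
move=> huv.
have po' := po.
case: po' => [[ix iy xy cov indX] [indY exy tr]].
pose Pc (c : 'I_n) := fun k => (k == c) || e (x c) (y k).
have clos c : forall k l, Pc c k -> e (x k) (y l) -> Pc c l.
  move=> k l; rewrite /Pc.
  case: (eqVneq k c) => [->|hkc] /= hk hkl; first by rewrite hkl orbT.
  case: (eqVneq l c) => [->|hlc] /=; first by [].
  case: (eqVneq k l) => [<-|hkl']; first by [].
  apply: (tr c k l) => //; by rewrite eq_sym.
have key a b : a != b -> exists c d, [/\ (c = a /\ d = b) \/ (c = b /\ d = a), c != d & ~~ e (x c) (y d)].
  move=> hab; case: (boolP (e (x a) (y b))) => h1; last by exists a, b; split => //; left.
  case: (boolP (e (x b) (y a))) => h2; last by exists b, a; split => //; [right|rewrite eq_sym].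
  by case: nc; exists a, b.
have keyM a b : a != b -> exists M, [/\ maximal_independent e M, (x a \in M) != (x b \in M) &
                                         (y a \in M) != (y b \in M)].
  move=> /key [c [d [hcd ncd nedge]]].
  have [M [hM mx my]] := upset_max e_sym po (clos c).
  have hx : (x c \in M) != (x d \in M).
    by rewrite !mx /Pc /= eqxx (negbTE nedge) (eq_sym d c) (negbTE ncd).
  have hy : (y c \in M) != (y d \in M).
    by rewrite !my /Pc /= eqxx (negbTE nedge) (eq_sym d c) (negbTE ncd).
  exists M; case: hcd => [[<- <-]|[<- <-]]; split => //; by rewrite eq_sym.
have [MT [hMT mxT myT]] := upset_max e_sym po (P := predT) (fun _ _ _ _ => isT).
have [[a ?]|[a ?]] := cov u; have [[b ?]|[b ?]] := cov v; subst u v.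
- have hab : a != b by apply: contra huv => /eqP ->.
  by have [M [hM h _]] := keyM a b hab; exists M.
- by exists MT; rewrite mxT myT.
- by exists MT; rewrite mxT myT.
- have hab : a != b by apply: contra huv => /eqP ->.
  by have [M [hM _ h]] := keyM a b hab; exists M.
Qed.

Theorem lemma4p5 (T : finType) (e : rel T)
  (e_sym : symmetric e) (e_irr : irreflexive e)
  (hbip : bipartite e) (hiso : no_isolated_vertices e) (hpure : Ind_pure e) :
  (exists (n : nat) (x y : 'I_n -> T), pure_order e x y /\ has_cross e x y) <->
  (forall (n : nat) (x y : 'I_n -> T), pure_order e x y -> has_cross e x y).
Proof.
split.
- move=> [n [x [y [po [i [j [hij [eij eji]]]]]]]] m x' y' po'.
  apply: NNPP => nc.
  have po1 := po; case: po1 => [[ix iy xy cov indX] [indY exy tr]].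
  have key M : maximal_independent e M -> (x i \in M) = (x j \in M).
    move=> hM; have /indP iM := (andP hM).1.
    have c := pair_cover hpure ix xy cov indX exy hM.
    apply/idP/idP => h.
    + have hy : y j \notin M by apply/negP => hy; move: (iM _ _ h hy); rewrite eij.
      by move: (c j); rewrite (negbTE hy) orbF.
    + have hy : y i \notin M by apply/negP => hy; move: (iM _ _ h hy); rewrite eji.
      by move: (c i); rewrite (negbTE hy) orbF.
  have hx : x i != x j by apply: contra hij => /eqP/ix ->; rewrite eqxx.
  have [M [hM hne]] := sep e_sym po' nc hx.
  by move: hne; rewrite (key M hM) eqxx.
- move=> H.
  case: hbip => A [indA indC].
  have maxA : maximal_independent e A.
    apply: max_crit => // v hv.
    have [u huv] := hiso v.
    exists u; last by rewrite e_sym.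
    apply/negPn/negP => hu.
    by move/indP: indC => /(_ v u); rewrite !inE hv hu huv => /(_ isT isT).
  have maxC : maximal_independent e (~: A).
    apply: max_crit => // v; rewrite inE negbK => hv.
    have [u huv] := hiso v.
    exists u; last by rewrite e_sym.
    rewrite inE; apply/negP => hu.
    by move/indP: indA => /(_ v u hv hu); rewrite huv.
  have cAC : #|A| = #|~: A| := hpure _ _ maxA maxC.
  have bound S : independent e S -> #|S| <= #|A|.
    move=> hS; have [M [hM sM]] := ind_extend hS.
    rewrite (hpure _ _ maxA hM); exact: subset_leq_card.
  have hallc : forall S : {set T}, S \subset A -> #|S| <= #|Nb e S|.
    move=> S sSA.
    have sNC : Nb e S \subset ~: A.
      apply/subsetP => v /NbP[u hu huv]; rewrite inE; apply/negP => hv.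
      by move/indP: indA => /(_ u v (subsetP sSA u hu) hv); rewrite huv.
    have hI : independent e (S :|: (~: A :\: Nb e S)).
      apply/indP => u v; rewrite !in_setU !in_setD !in_setC => /orP[hu|/andP[huN huA]] /orP[hv|/andP[hvN hvA]].
      - by move/indP: indA; apply; apply: (subsetP sSA).
      - apply/negP => h; move/negP: hvN; apply; apply/NbP; by exists u.
      - apply/negP => h; move/negP: huN; apply; apply/NbP; exists v => //; by rewrite e_sym.
      - by move/indP: indC; apply; rewrite inE.
    have dj : S :&: (~: A :\: Nb e S) = set0.
      apply/setP => v; rewrite !inE; apply/negP => /and3P[hv _ hvA].
      by move: hvA; rewrite (subsetP sSA v hv).
    have := bound _ hI.
    rewrite cardsU dj cards0 subn0 (cardsDS sNC) -cAC.
    have hN : #|Nb e S| <= #|A| by rewrite cAC; exact: subset_leq_card.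
    by rewrite -{2}(subnKC hN) leq_add2r.
  have [f [injf ef]] := hall (leqnn _) hallc.
  have fC a : a \in A -> f a \in ~: A.
    move=> ha; rewrite inE; apply/negP => hfa.
    by move/indP: indA => /(_ a (f a) ha hfa); rewrite ef.
  have imA : f @: A = ~: A.
    apply/eqP; rewrite eqEcard card_in_imset // -cAC leqnn andbT.
    by apply/subsetP => _ /imsetP[a ha ->]; apply: fC.
  pose x := fun i : 'I_#|A| => (enum_val i : T).
  pose y := fun i : 'I_#|A| => f (x i).
  have xA i : x i \in A by apply: enum_valP.
  have ix : injective x by move=> i j; apply: enum_val_inj.
  have iy : injective y by move=> i j /injf h; apply: ix; apply: h.
  have xy i j : x i != y j.
    by apply/eqP => h; move: (fC _ (xA j)); rewrite -/(y j) -h inE xA.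
  have cov v : (exists i, v = x i) \/ (exists i, v = y i).
    case: (boolP (v \in A)) => hv.
      by left; exists (enum_rank_in hv v); rewrite /x enum_rankK_in.
    have : v \in f @: A by rewrite imA inE.
    case/imsetP => a ha ->; right; exists (enum_rank_in ha a).
    by rewrite /y /x enum_rankK_in.
  have indX : independent e [set x i | i in 'I_#|A|].
    apply: ind_sub indA _; apply/subsetP => _ /imsetP[i _ ->]; exact: xA.
  have indY : independent e [set y i | i in 'I_#|A|].
    apply: ind_sub indC _; apply/subsetP => _ /imsetP[i _ ->]; exact: fC.
  have exy i : e (x i) (y i) by apply: ef.
  have po : pure_order e x y.
    split; split => //.
    move=> i j k hij hjk hik eij ejk; apply/negPn/negP => nik.
    have hS : independent e [set x i; y k].
      apply/indP => u v; rewrite !inE => /orP[]/eqP-> /orP[]/eqP->.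
      - by rewrite e_irr.
      - by [].
      - by rewrite e_sym.
      - by rewrite e_irr.
    have [M [hM sM]] := ind_extend hS.
    have /indP iM := (andP hM).1.
    have hxi : x i \in M by apply: (subsetP sM); rewrite !inE eqxx.
    have hyk : y k \in M by apply: (subsetP sM); rewrite !inE eqxx orbT.
    case/orP: (pair_cover hpure ix xy cov indX exy hM j) => h.
    - by move: (iM _ _ h hyk); rewrite ejk.
    - by move: (iM _ _ hxi h); rewrite eij.
  by exists #|A|, x, y; split => //; apply: H.
Qed.
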